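(* Assume the standing setting. Let $\epsilon>0$, fix a coarse index $j\in\mathbb Z$ and an integer $m$ with $1\le m\le r$. There exists $\delta>0$ such that if $|u^0_i-u^0_{i+1}|\le\delta$ for all $i\in\mathbb Z$, then $$|v_m-u_m|\le \tfrac32 h+\tfrac34|d_1+d_2|+\epsilon .$$
   Context: Standing setting. Let $F:\mathbb R\to\mathbb R$ be continuously differentiable. For a spatial step $\eta>0$, a time step $\tau>0$ and an initial sequence $(z^0_i)_{i\in\mathbb Z}$ of reals, the EFC (Euler forward in time, centered in space) scheme produces $(z^n_i)_{i\in\mathbb Z,\,n\in\mathbb N}$ by $z^{n+1}_i=z^n_i-F'(z^n_i)\frac{\tau}{2\eta}\,(z^n_{i+1}-z^n_{i-1})$. It satisfies the CFL condition if $|F'(z^n_i)|\,\tau/\eta\le 1$ for all $i\in\mathbb Z$, $n\in\mathbb N$. Fix $a\in\mathbb R$, $h>0$, $\Delta t>0$, an integer $N>1$ and an even integer $r\ge 2$; put $k=h/r$, $dt=\Delta t/r$, $M=Nr$. Let $u_0:\mathbb R\to\mathbb R$. The coarse solution $(w^n_j)$ is the EFC scheme with $\eta=h$, $\tau=\Delta t$, $w^0_j=u_0(a+jh)$; the fine solution $(u^n_i)$ is the EFC scheme with $\eta=k$, $\tau=dt$, $u^0_i=u_0(a+ik)$ (so $w^0_j=u^0_{jr}$). Both are assumed to satisfy the CFL condition. Coarse nodes: $x_j=a+jh$. Interpolant: for a fixed coarse index $j$, set $p_1=x_j$, $p_2=x_{j+1}$, $d_1=w^N_j$, $d_2=w^N_{j+1}$,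 let $q$ be the cubic with $q(0)=p_1$, $q(1)=p_2$, $q'(0)=d_1$, $q'(1)=d_2$, and let $v(t)=q'(t)=(6p_1-6p_2+3d_1+3d_2)t^2+(-6p_1+6p_2-4d_1-2d_2)t+d_1$ for $t\in[0,1]$. For $0\le m\le r$ put $v_m=v(m/r)$ and $u_m=u^M_{jr+m}$ (the fine solution at time step $M$ at the fine node $x_j+mk$). *)

(* Defs.v *)
From Stdlib Require Import Reals ZArith Arith.
Open Scope R_scope.

(* EFC scheme: z^{n+1}_i = z^n_i - F'(z^n_i) * tau/(2 eta) * (z^n_{i+1} - z^n_{i-1}).
   dF stands for F' (the theorem ties it to F by derivable_pt_lim). *)
Fixpoint EFC (dF : R -> R) (eta tau : R) (z0 : Z -> R) (n : nat) : Z -> R :=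
  match n with
  | O => z0
  | S n' =>
      let z := EFC dF eta tau z0 n' in
      fun i => z i - dF (z i) * (tau / (2 * eta)) * (z (i + 1)%Z - z (i - 1)%Z)
  end.

Definition CFL (dF : R -> R) (eta tau : R) (z0 : Z -> R) : Prop :=
  forall (n : nat) (i : Z), Rabs (dF (EFC dF eta tau z0 n i)) * tau / eta <= 1.

(* v(t) = q'(t), q the cubic Hermite interpolant with q(0)=p1, q(1)=p2,
   q'(0)=d1, q'(1)=d2. *)
Definition hermite_v (p1 p2 d1 d2 t : R) : R :=
  (6*p1 - 6*p2 + 3*d1 + 3*d2) * t^2 + (-6*p1 + 6*p2 - 4*d1 - 2*d2) * t + d1.

(* Main.v *)
Require Import Defs.
From Stdlib Require Import Reals ZArith Arith Lra Lia Psatz.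
Open Scope R_scope.

Lemma prod_bound c X a b : Rabs c <= a -> Rabs X <= b -> Rabs (c*X) <= a*b.
Proof.
  intros Hc HX. rewrite Rabs_mult.
  apply Rmult_le_compat; try apply Rabs_pos; assumption.
Qed.

Lemma coef_bound dF eta tau z0 n i : 0 < eta -> 0 < tau -> CFL dF eta tau z0 ->
  Rabs (dF (EFC dF eta tau z0 n i) * (tau / (2 * eta))) <= 1/2.
Proof.
  intros He Ht HC. specialize (HC n i).
  rewrite Rabs_mult. rewrite (Rabs_pos_eq (tau / (2*eta))).
  2:{ apply Rlt_le. apply Rdiv_lt_0_compat; lra. }
  replace (Rabs (dF (EFC dF eta tau z0 n i)) * (tau / (2 * eta)))
    with ((Rabs (dF (EFC dF eta tau z0 n i)) * tau / eta) / 2) by (field; lra).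
  lra.
Qed.

Lemma efc_diff dF eta tau z0 D : 0 < eta -> 0 < tau -> CFL dF eta tau z0 ->
  (forall i, Rabs (z0 (i+1)%Z - z0 i) <= D) ->
  forall n i, Rabs (EFC dF eta tau z0 n (i+1)%Z - EFC dF eta tau z0 n i) <= 3^n * D.
Proof.
  intros He Ht HC H0 n. induction n as [|n IH]; intro i.
  - simpl. rewrite Rmult_1_l. apply H0.
  - simpl EFC. set (z := EFC dF eta tau z0 n).
    set (c := fun x => dF (z x) * (tau / (2*eta))).
    change (Rabs (z (i+1)%Z - c (i+1)%Z * (z (i+1+1)%Z - z (i+1-1)%Z)
                  - (z i - c i * (z (i+1)%Z - z (i-1)%Z))) <= 3 ^ S n * D).
    assert (Hc : forall x, Rabs (c x) <= 1/2) by (intro x; apply coef_bound; auto).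
    assert (E1 := IH i). assert (E2 := IH (i+1)%Z). assert (E3 := IH (i-1)%Z).
    replace (i - 1 + 1)%Z with i in E3 by lia.
    replace (i + 1 - 1)%Z with i by lia.
    fold z in E1, E2, E3.
    assert (P1 := prod_bound (c (i+1)%Z) (z (i+1+1)%Z - z i) (1/2) (2 * (3^n*D)) (Hc _)).
    assert (P2 := prod_bound (c i) (z (i+1)%Z - z (i-1)%Z) (1/2) (2 * (3^n*D)) (Hc _)).
    assert (A1 : Rabs (z (i+1+1)%Z - z i) <= 2 * (3^n*D)).
    { replace (z (i+1+1)%Z - z i) with ((z (i+1+1)%Z - z (i+1)%Z) + (z (i+1)%Z - z i)) by ring.
      eapply Rle_trans. apply Rabs_triang. lra. }
    assert (A2 : Rabs (z (i+1)%Z - z (i-1)%Z) <= 2 * (3^n*D)).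
    { replace (z (i+1)%Z - z (i-1)%Z) with ((z (i+1)%Z - z i) + (z i - z (i-1)%Z)) by ring.
      eapply Rle_trans. apply Rabs_triang. lra. }
    specialize (P1 A1). specialize (P2 A2).
    simpl pow.
    revert E1 P1 P2. generalize (c (i+1)%Z * (z (i + 1 + 1)%Z - z i)) (c i * (z (i+1)%Z - z (i-1)%Z)).
    intros X Y E1 P1 P2.
    replace (z (i + 1)%Z - X - (z i - Y)) with ((z (i+1)%Z - z i) + (- X) + Y) by ring.
    eapply Rle_trans. apply Rabs_triang. rewrite <- (Rabs_Ropp X) in P1.
    assert (T := Rabs_triang (z (i+1)%Z - z i) (-X)). lra.
Qed.

Lemma efc_drift dF eta tau z0 D : 0 < eta -> 0 < tau -> CFL dF eta tau z0 -> 0 <= D ->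
  (forall i, Rabs (z0 (i+1)%Z - z0 i) <= D) ->
  forall n i, Rabs (EFC dF eta tau z0 n i - z0 i) <= (3^n - 1) * D.
Proof.
  intros He Ht HC HD H0 n. induction n as [|n IH]; intro i.
  - simpl. unfold Rminus. rewrite Rplus_opp_r, Rabs_R0. lra.
  - assert (S1 : Rabs (EFC dF eta tau z0 (S n) i - EFC dF eta tau z0 n i) <= 3^n * D).
    { simpl EFC. set (z := EFC dF eta tau z0 n).
      replace (z i - dF (z i) * (tau / (2 * eta)) * (z (i + 1)%Z - z (i - 1)%Z) - z i)
        with (- (dF (z i) * (tau / (2 * eta)) * (z (i + 1)%Z - z (i - 1)%Z))) by ring.
      rewrite Rabs_Ropp.
      replace (3^n*D) with (1/2 * (2 * (3^n*D))) by field.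
      apply prod_bound. apply coef_bound; auto.
      assert (E1 := efc_diff dF eta tau z0 D He Ht HC H0 n i).
      assert (E3 := efc_diff dF eta tau z0 D He Ht HC H0 n (i-1)%Z).
      replace (i - 1 + 1)%Z with i in E3 by lia. fold z in E1, E3.
      replace (z (i+1)%Z - z (i-1)%Z) with ((z (i+1)%Z - z i) + (z i - z (i-1)%Z)) by ring.
      eapply Rle_trans. apply Rabs_triang. lra. }
    specialize (IH i).
    replace (EFC dF eta tau z0 (S n) i - z0 i) with
      ((EFC dF eta tau z0 (S n) i - EFC dF eta tau z0 n i) + (EFC dF eta tau z0 n i - z0 i)) by ring.
    eapply Rle_trans. apply Rabs_triang. simpl pow.
    assert (1 <= 3^n) by (apply pow_R1_Rle; lra). nra.
Qed.

Lemma chain (z : Z -> R) D : (forall i, Rabs (z (i+1)%Z - z i) <= D) ->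
  forall n i, Rabs (z (i + Z.of_nat n)%Z - z i) <= INR n * D.
Proof.
  intros H n. induction n as [|n IH]; intro i.
  - simpl. rewrite Z.add_0_r. unfold Rminus. rewrite Rplus_opp_r, Rabs_R0. lra.
  - rewrite Nat2Z.inj_succ, S_INR.
    replace (i + Z.succ (Z.of_nat n))%Z with ((i + Z.of_nat n) + 1)%Z by lia.
    replace (z (i + Z.of_nat n + 1)%Z - z i) with
      ((z (i + Z.of_nat n + 1)%Z - z (i + Z.of_nat n)%Z) + (z (i + Z.of_nat n)%Z - z i)) by ring.
    eapply Rle_trans. apply Rabs_triang.
    specialize (IH i). specialize (H (i + Z.of_nat n)%Z). lra.
Qed.

Theorem corollary3
  (F dF : R -> R)
  (HF : forall x, derivable_pt_lim F x (dF x))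
  (HdF : continuity dF)
  (a h Dt : R) (N r : nat)
  (Hh : 0 < h) (HDt : 0 < Dt) (HN : (1 < N)%nat) (Hr : (2 <= r)%nat)
  (Hreven : Nat.Even r)
  (eps : R) (Heps : 0 < eps) (j : Z) (m : nat) (Hm : (1 <= m <= r)%nat) :
  exists delta : R, 0 < delta /\
    forall u0 : R -> R,
      let k := h / INR r in
      let dt := Dt / INR r in
      let M := (N * r)%nat in
      let w0 := fun jj : Z => u0 (a + IZR jj * h) in
      let ui0 := fun i : Z => u0 (a + IZR i * k) in
      CFL dF h Dt w0 ->
      CFL dF k dt ui0 ->
      (forall i : Z, Rabs (ui0 i - ui0 (i + 1)%Z) <= delta) ->
      let p1 := a + IZR j * h in
      let p2 := a + IZR (j + 1) * h in
      let d1 := EFC dF h Dt w0 N j in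
      let d2 := EFC dF h Dt w0 N (j + 1)%Z in
      let v_m := hermite_v p1 p2 d1 d2 (INR m / INR r) in
      let u_m := EFC dF k dt ui0 M (j * Z.of_nat r + Z.of_nat m)%Z in
      Rabs (v_m - u_m) <= 3/2 * h + 3/4 * Rabs (d1 + d2) + eps.
Proof.
  assert (Hr0 : 0 < INR r) by (apply lt_0_INR; lia).
  assert (HmR : INR m <= INR r) by (apply le_INR; lia).
  assert (Hm0 : 0 <= INR m) by apply pos_INR.
  assert (P3N : 1 <= 3^N) by (apply pow_R1_Rle; lra).
  assert (P3M : 1 <= 3^(N*r)) by (apply pow_R1_Rle; lra).
  set (K := 3^N * INR r + 3^(N*r) + INR r).
  assert (HK : 0 < K) by (unfold K; nra).
  exists (eps / (3*K)). split. { apply Rdiv_lt_0_compat; lra. }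
  intros u0 k dt M w0 ui0 HC1 HC2 Hd p1 p2 d1 d2 v_m u_m.
  set (delta := eps / (3*K)) in *.
  assert (Hdel : 0 < delta) by (unfold delta; apply Rdiv_lt_0_compat; lra).
  assert (Hk : 0 < k) by (unfold k; apply Rdiv_lt_0_compat; lra).
  assert (Hdt : 0 < dt) by (unfold dt; apply Rdiv_lt_0_compat; lra).
  assert (Hd' : forall i, Rabs (ui0 (i+1)%Z - ui0 i) <= delta).
  { intro i. rewrite Rabs_minus_sym. apply Hd. }
  assert (Hid : forall jj, ui0 (jj * Z.of_nat r)%Z = w0 jj).
  { intro jj. unfold ui0, w0, k. f_equal. rewrite mult_IZR, <- INR_IZR_INZ. field. lra. }
  assert (Hw : forall jj, Rabs (w0 (jj+1)%Z - w0 jj) <= INR r * delta).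
  { intro jj. rewrite <- !Hid.
    replace ((jj+1) * Z.of_nat r)%Z with (jj * Z.of_nat r + Z.of_nat r)%Z by lia.
    apply chain. exact Hd'. }
  set (c := w0 j).
  assert (Dr : 0 <= INR r * delta) by nra.
  assert (E1 : Rabs (d1 - c) <= (3^N - 1) * (INR r * delta)).
  { apply efc_drift; auto. }
  assert (E2 : Rabs (d2 - c) <= 3^N * (INR r * delta)).
  { assert (X := efc_drift dF h Dt w0 (INR r * delta) Hh HDt HC1 Dr Hw N (j+1)%Z).
    assert (Y := Hw j). fold d2 in X. fold c in Y.
    replace (d2 - c) with ((d2 - w0 (j+1)%Z) + (w0 (j+1)%Z - c)) by ring.
    eapply Rle_trans. apply Rabs_triang. lra. }
  assert (E3 : Rabs (u_m - c) <= (3^(N*r)) * delta + INR r * delta).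
  { assert (X := efc_drift dF k dt ui0 delta Hk Hdt HC2 (Rlt_le _ _ Hdel) Hd' M
                  (j * Z.of_nat r + Z.of_nat m)%Z).
    fold u_m in X.
    assert (Y := chain ui0 delta Hd' m (j * Z.of_nat r)%Z).
    unfold c. rewrite <- Hid.
    replace (u_m - ui0 (j * Z.of_nat r)%Z) with
      ((u_m - ui0 (j * Z.of_nat r + Z.of_nat m)%Z) +
       (ui0 (j * Z.of_nat r + Z.of_nat m)%Z - ui0 (j * Z.of_nat r)%Z)) by ring.
    eapply Rle_trans. apply Rabs_triang. unfold M in X. nra. }
  assert (HE : K * delta = eps / 3) by (unfold delta; field; lra).
  set (E := K * delta) in *.
  assert (F1 : Rabs (d1 - c) <= E) by (unfold E, K; nra).
  assert (F2 : Rabs (d2 - c) <= E) by (unfold E, K; nra).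
  assert (F3 : Rabs (u_m - c) <= E) by (unfold E, K; nra).
  set (t := INR m / INR r) in v_m.
  assert (Ht0 : 0 <= t) by (unfold t; unfold Rdiv; apply Rmult_le_pos; [lra | left; apply Rinv_0_lt_compat; lra]).
  assert (Ht1 : t <= 1).
  { unfold t. apply (Rmult_le_reg_r (INR r)); auto. field_simplify; lra. }
  replace (v_m - u_m) with
    ((6*t*(1-t)) * (h - (d1+d2)/2) + (((d1+d2)/2 - u_m) + (d1-d2)*(1/2-t))).
  2:{ unfold v_m, hermite_v, p1, p2. rewrite plus_IZR. field. }
  eapply Rle_trans. apply Rabs_triang.
  assert (T0 : 0 <= 6*t*(1-t)) by nra.
  assert (T1 : 6*t*(1-t) <= 3/2) by (assert (SS := pow2_ge_0 (t - 1/2)); simpl in SS; nra).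
  assert (G1 : Rabs (6*t*(1-t) * (h - (d1+d2)/2)) <= 3/2 * h + 3/4 * Rabs (d1+d2)).
  { rewrite Rabs_mult, (Rabs_pos_eq _ T0).
    assert (Rabs (h - (d1+d2)/2) <= h + Rabs (d1+d2) / 2) by (split_Rabs; lra).
    assert (0 <= Rabs (h - (d1+d2)/2)) by apply Rabs_pos.
    nra. }
  assert (G2 : Rabs ((d1-d2)*(1/2-t)) <= (2*E) * (1/2)).
  { apply prod_bound. revert F1 F2. split_Rabs; lra. split_Rabs; lra. }
  assert (G3 : Rabs ((d1+d2)/2 - u_m) <= 2*E) by (revert F1 F2 F3; split_Rabs; lra).
  assert (G4 := Rabs_triang ((d1+d2)/2 - u_m) ((d1-d2)*(1/2-t))).
  lra.
Qed.
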